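(* Consider the distributed peeling protocol described in the context, run in the synchronous phase model described in the context. Then: (i) for $k$-core mining (threshold $k(v)=k$ for all $v$) on a graph $G=(V,E)$ with $k\le |V|$, the protocol converges in no more than $|V|-k$ phases; (ii) for $(k_1,k_2)$-core mining (threshold $k(v)=k_i$ for $v\in V_i$) on a bipartite graph $G=(V_1,V_2,E)$, it converges in no more than $(|V_1|-k_2)+(|V_2|-k_1)+1$ phases; (iii) for $(k_1,\ldots,k_p)$-core mining (threshold $k(v)=k_i$ for $v\in V_i$) on a $p$-partite graph $G=(V_1,\ldots,V_p,E)$ with $k_i\le |V_i|$ for all $1\le i\le p$, it converges in no more than $\sum_{i=1}^p |V_i| - \min_{1\le i\le p} k_i$ phases.
   Context: All graphs are finite simple undirected. A $p$-partite graph $G=(V_1,\ldots,V_p,E)$ has vertex set partitioned into disjoint sets $V_1,\ldots,V_p$ with no edges inside any $V_i$ (bipartite means $p=2$). Distributed peeling protocol with thresholds $k(v)$: each node $v$ keeps a counter $degree$, initialized to $\deg_G(v)$, and a status, initially active. Initially, if $degree<k(v)$, node $v$ sends an ''off'' message to each of its neighbors and becomes inactive. An active node, upon receiving a message, sets $degree=degree-1$; if then $degree<k(v)$, it sends an ''off'' message to each of its neighbors and becomes inactive. An inactive node remains inactive and ignores all incoming messages. Synchronous phase model: nodes operate in synchronized phases; in each phase, every node receives all messages sent by other nodes in the previous phase and, if applicable, sends off-messages to all its neighbors. The protocol converges at the phase after which no further node becomes inactive and no messages are sent. *)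

(* Defs.v *)
From mathcomp Require Import all_boot.
Set Implicit Arguments. Unset Strict Implicit. Unset Printing Implicit Defensive.

Definition simple_graph (T : finType) (e : rel T) := symmetric e /\ irreflexive e.

Definition ppartite (T : finType) (p : nat) (part : T -> 'I_p) (e : rel T) :=
  forall x y, e x y -> part x != part y.

(* minimum of k over 'I_p (the max is used only as neutral element; for p > 0
   this is exactly min_i k i; for p = 0 it is 0). *)
Definition maxval (p : nat) (k : 'I_p -> nat) : nat := \max_(i < p) k i.
Definition minval (p : nat) (k : 'I_p -> nat) : nat :=
  \big[minn/maxval k]_(i < p) k i.

Section Peeling.
Variables (T : finType) (e : rel T) (thr : T -> nat).

(* state of every node after a phase: its counter, its status (true = active),
   and whether it sends "off" messages (to all its neighbours) in that phase *)
Record pstate := PState { cnt : T -> nat; active : T -> bool; sending : T -> bool }.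

Definition deg (v : T) : nat := #|[set u | e v u]|.

Definition init_state : pstate :=
  PState deg (fun v => thr v <= deg v) (fun v => deg v < thr v).

Definition received (s : pstate) (v : T) : nat :=
  #|[set u | sending s u && e u v]|.

Definition step (s : pstate) : pstate :=
  PState (fun v => if active s v then cnt s v - received s v else cnt s v)
         (fun v => active s v && (thr v <= cnt s v - received s v))
         (fun v => active s v && (cnt s v - received s v < thr v)).

(* state after phase t (phase 0 = initialisation) *)
Definition run (t : nat) : pstate := iter t step init_state.

Definition converges_within (N : nat) : Prop :=
  forall t, N < t -> forall v,
    sending (run t) v = false /\ active (run t) v = active (run N) v.
End Peeling.

(* Main.v *)
Require Import Defs.
From mathcomp Require Import all_boot.
From mathcomp Require Import zify.

Set Implicit Arguments. Unset Strict Implicit. Unset Printing Implicit Defensive.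

Section Core.
Variables (T : finType) (e : rel T) (thr : T -> nat).
Hypothesis esym : symmetric e.
Hypothesis eirr : irreflexive e.

Definition nb (S : {set T}) v := [set u in S | e v u].

Definition Bstep := locked (fun S : {set T} => [set v in S | thr v <= #|nb S v|]).

Fixpoint Bs t : {set T} :=
  match t with 0 => setT | t'.+1 => Bstep (Bs t') end.

Lemma Bs_S t v : (v \in Bs t.+1) = (v \in Bs t) && (thr v <= #|nb (Bs t) v|).
Proof. by rewrite /= /Bstep -lock inE. Qed.

Lemma Bs_sub t : Bs t.+1 \subset Bs t.
Proof. by apply/subsetP=> v; rewrite Bs_S => /andP[]. Qed.

Lemma inv t : forall v,
  [/\ active (run e thr t) v = (v \in Bs t.+1),
      sending (run e thr t) v = (v \in Bs t) && (#|nb (Bs t) v| < thr v) &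
      (active (run e thr t) v -> cnt (run e thr t) v = #|nb (Bs t) v|)].
Proof.
elim: t => [|t IH] v.
  have Hn : nb setT v = [set u | e v u] by apply/setP=> u; rewrite !inE.
  rewrite Bs_S /= /deg !inE Hn; split => //.
have Hrec : received e (run e thr t) v = #|nb (Bs t) v :\: Bs t.+1|.
  apply: eq_card => u; rewrite !inE.
  have [_ s1 _] := IH u.
  rewrite s1 Bs_S esym; case: (u \in Bs t) => //=.
  by rewrite ltnNge andbC.
have Hcard : #|nb (Bs t.+1) v| = #|nb (Bs t) v| - #|nb (Bs t) v :\: Bs t.+1|.
  have -> : nb (Bs t.+1) v = nb (Bs t) v :&: Bs t.+1.
    apply/setP=> u; rewrite !inE Bs_S.
    by case: (u \in Bs t); case: (e v u); case: (thr u <= _).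
  have := cardsID (Bs t.+1) (nb (Bs t) v); lia.
have [a1 s1 c1] := IH v.
rewrite (Bs_S t.+1 v) Hcard -Hrec -a1.
change (run e thr t.+1) with (step e thr (run e thr t)); rewrite /step /=.
case Ha: (active (run e thr t) v) => //=.
by rewrite c1.
Qed.

Lemma stab s : Bs s.+1 = Bs s -> forall d, Bs (s + d) = Bs s.
Proof.
move=> H; elim=> [|d IH]; first by rewrite addn0.
rewrite addnS /= IH; exact: H.
Qed.

Lemma conv N : Bs N.+2 = Bs N.+1 -> converges_within e thr N.
Proof.
move=> H t Ht v.
have Ht' : t = N.+1 + (t - N.+1) by lia.
have E1 : Bs t = Bs N.+1 by rewrite Ht' (stab H).
have E2 : Bs t.+1 = Bs N.+1 by rewrite Ht' -addnS (stab H).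
have [a1 s1 _] := inv t v; have [a2 _ _] := inv N v.
rewrite a1 a2 E2; split => //.
rewrite s1; case Hv: (v \in Bs t) => //=.
have : v \in Bs t.+1 by rewrite E2 -E1.
by rewrite Bs_S Hv /= ltnNge => ->.
Qed.

Lemma neq_prev s : Bs s.+1 != Bs s -> forall i, i <= s -> Bs i.+1 != Bs i.
Proof.
move=> H i Hi; apply/eqP=> Hc; move/eqP: H; apply.
have Hs : s = i + (s - i) by lia.
have Hs1 : s.+1 = i + (s.+1 - i) by lia.
by rewrite Hs1 Hs !stab.
Qed.

Lemma cnt_chain s : Bs s.+1 != Bs s -> forall i, i <= s.+1 -> #|Bs i| + i <= #|T|.
Proof.
move=> H; elim=> [|i IH] Hi; first by rewrite addn0 /= cardsT.
have Hne := neq_prev H (i:=i) (ltnSE Hi).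
have Hlt : #|Bs i.+1| < #|Bs i|.
  apply: proper_card; by rewrite properEneq Hne Bs_sub.
have := IH (ltnW Hi); lia.
Qed.

Lemma drop_ex (A B : {set T}) : #|A| < #|B| -> exists2 x, x \in B & x \notin A.
Proof.
move=> H; apply/subsetPn; apply/negP => /subset_leq_card Hle.
by rewrite ltnNge Hle in H.
Qed.

Lemma removed_ex N : Bs N.+2 != Bs N.+1 -> exists2 v, v \in Bs N.+1 & v \notin Bs N.+2.
Proof.
move=> H; apply/subsetPn; apply/negP => Hs; move/negP: H; apply.
by rewrite eqEsubset Bs_sub Hs.
Qed.

Lemma key1 N : Bs N.+2 != Bs N.+1 -> exists v, thr v + N.+1 <= #|T|.
Proof.
move=> H; have [v Hv1 _] := removed_ex H; exists v.
move: Hv1; rewrite Bs_S => /andP[HvN Hthr].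
have Hsub : v |: nb (Bs N) v \subset Bs N.
  apply/subsetP=> x; rewrite !inE => /orP[/eqP->//|/andP[]//].
have Hvn : v \notin nb (Bs N) v by rewrite inE eirr andbF.
have := subset_leq_card Hsub; rewrite cardsU1 Hvn.
have := cnt_chain H (i:=N) (leqW (leqnSn N)); lia.
Qed.

Lemma key2 (W : {set T}) a b M v :
  (forall x, thr x = if x \in W then a else b) ->
  (forall x y, e x y -> (x \in W) != (y \in W)) ->
  v \in W -> v \in Bs M.+2 -> v \notin Bs M.+3 ->
  M = (#|W| - b) + (#|~: W| - a) -> False.
Proof.
move=> Hthr Hbip HvW Hv2 Hv3 HM.
have Hne : Bs M.+3 != Bs M.+2 by apply/eqP=> E; move: Hv3; rewrite E Hv2.
have Hchain := cnt_chain Hne (i:=M) (leqW (leqW (leqnSn M))).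
move: (Hv2); rewrite Bs_S => /andP[Hv1 Hthv].
move: Hv3; rewrite Bs_S Hv2 andTb -ltnNge => Hltv.
rewrite Hthr HvW in Hthv Hltv.
have Hsubv : nb (Bs M.+2) v \subset nb (Bs M.+1) v.
  apply/subsetP=> x; rewrite !inE => /andP[Hx ->]; rewrite andbT.
  exact: (subsetP (Bs_sub _)).
have [u Hu1 Hu2] : exists2 u, u \in nb (Bs M.+1) v & u \notin nb (Bs M.+2) v.
  apply: drop_ex; lia.
move: Hu1; rewrite inE => /andP[HuM1 Hvu].
have HuM2 : u \notin Bs M.+2 by move: Hu2; rewrite inE Hvu andbT.
have HuW : u \notin W by have := Hbip _ _ Hvu; rewrite HvW; case: (u \in W).
move: (HuM1); rewrite Bs_S => /andP[HuM Hthu].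
move: HuM2; rewrite Bs_S HuM1 andTb -ltnNge => Hltu.
rewrite Hthr (negbTE HuW) in Hthu Hltu.
have Hsubu : nb (Bs M.+1) u \subset nb (Bs M) u.
  apply/subsetP=> x; rewrite !inE => /andP[Hx ->]; rewrite andbT.
  exact: (subsetP (Bs_sub _)).
have [w Hw1 Hw2] : exists2 w, w \in nb (Bs M) u & w \notin nb (Bs M.+1) u.
  apply: drop_ex; lia.
move: Hw1; rewrite inE => /andP[HwM Huw].
have HwM1 : w \notin Bs M.+1 by move: Hw2; rewrite inE Huw andbT.
have HwW : w \in W by have := Hbip _ _ Huw; rewrite (negbTE HuW); case: (w \in W).
move: HwM1; rewrite Bs_S HwM andTb -ltnNge => Hltw.
rewrite Hthr HwW in Hltw.
set P := Bs M :&: W; set Q := Bs M :\: W.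
have HPQ : #|P| + #|Q| = #|Bs M| by rewrite cardsID.
have HPW : #|P| <= #|W| by apply: subset_leq_card; apply: subsetIr.
have HQW : #|Q| <= #|~: W|.
  by apply: subset_leq_card; apply/subsetP=> x; rewrite !inE => /andP[->].
have HWT : #|W| + #|~: W| = #|T| by rewrite cardsC.
have HvQ : nb (Bs M.+1) v \subset Q.
  apply/subsetP=> x; rewrite !inE => /andP[Hx Hvx].
  rewrite (subsetP (Bs_sub _) _ Hx) andbT.
  by have := Hbip _ _ Hvx; rewrite HvW; case: (x \in W).
have HuP : nb (Bs M) u \subset P.
  apply/subsetP=> x; rewrite !inE => /andP[Hx Hux].
  rewrite Hx /=.
  by have := Hbip _ _ Hux; rewrite (negbTE HuW); case: (x \in W).
have HQa : a <= #|Q| := leq_trans Hthv (subset_leq_card HvQ).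
have HPb : b <= #|P| := leq_trans Hthu (subset_leq_card HuP).
have Hstrict : (b < #|P|) || (a < #|Q|).
  case: (leqP #|P| b) => HPle; last by apply/orP; left.
  case: (leqP #|Q| a) => HQle; last by apply/orP; right.
  exfalso.
  have EQ : nb (Bs M.+1) v = Q.
    apply/eqP; rewrite eqEcard HvQ /=; exact: leq_trans HQle Hthv.
  have HqP : forall q, q \in Q -> nb (Bs M) q = P.
    move=> q Hq.
    have : q \in nb (Bs M.+1) v by rewrite EQ.
    rewrite inE Bs_S => /andP[/andP[HqM Hthq] _].
    have HqW : q \notin W by move: Hq; rewrite !inE => /andP[].
    rewrite Hthr (negbTE HqW) in Hthq.
    have Hsq : nb (Bs M) q \subset P.
      apply/subsetP=> x; rewrite !inE => /andP[Hx Hqx].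
      rewrite Hx /=.
      by have := Hbip _ _ Hqx; rewrite (negbTE HqW); case: (x \in W).
    apply/eqP; rewrite eqEcard Hsq /=; exact: leq_trans HPle Hthq.
  have HQw : Q \subset nb (Bs M) w.
    apply/subsetP=> q Hq; rewrite inE.
    have HqM : q \in Bs M by move: Hq; rewrite !inE => /andP[].
    have : w \in nb (Bs M) q by rewrite (HqP q Hq) !inE HwM HwW.
    by rewrite inE HqM esym => /andP[].
  have H1 := leq_ltn_trans (subset_leq_card HQw) Hltw.
  by rewrite ltnNge HQa in H1.
clearbody P Q.
clear -HPQ HPW HQW HWT HQa HPb Hstrict HM Hchain.
move: Hstrict => /orP[] Hs; lia.
Qed.

End Core.

Lemma big_minn_le (I : finType) (F : I -> nat) x j : \big[minn/x]_(i : I) F i <= F j.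
Proof.
elim: (index_enum I) (mem_index_enum j) => // a r IH.
rewrite inE big_cons => /orP[/eqP<-|/IH H]; first exact: geq_minl.
exact: leq_trans (geq_minr _ _) H.
Qed.

Theorem lemma2 :
  (* (i) k-core mining *)
  (forall (T : finType) (e : rel T) (k : nat),
      simple_graph e -> k <= #|T| ->
      converges_within e (fun _ => k) (#|T| - k)) /\
  (* (ii) (k1,k2)-core mining on a bipartite graph with parts V1, V2 = ~: V1 *)
  (forall (T : finType) (e : rel T) (V1 : {set T}) (k1 k2 : nat),
      simple_graph e ->
      (forall x y, e x y -> (x \in V1) != (y \in V1)) ->
      converges_within e (fun v => if v \in V1 then k1 else k2)
        ((#|V1| - k2) + (#|~: V1| - k1) + 1)) /\
  (* (iii) (k_1,...,k_p)-core mining on a p-partite graph *)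
  (forall (T : finType) (e : rel T) (p : nat) (part : T -> 'I_p) (k : 'I_p -> nat),
      simple_graph e -> ppartite part e ->
      (forall i, k i <= #|[set v | part v == i]|) ->
      converges_within e (fun v => k (part v))
        ((\sum_(i < p) #|[set v | part v == i]|) - minval k)).
Proof.
split; [|split].
- move=> T e k [Hs Hi] Hk.
  case: (eqVneq (Bs e (fun _ => k) (#|T| - k).+2) (Bs e (fun _ => k) (#|T| - k).+1)) => H.
    exact: (conv Hs H).
  have [v Hv] := key1 Hi H; lia.
- move=> T e V1 k1 k2 [Hs Hi] Hb.
  set thr := fun v => if v \in V1 then k1 else k2.
  set M := (#|V1| - k2) + (#|~: V1| - k1).
  rewrite addn1.
  case: (eqVneq (Bs e thr M.+3) (Bs e thr M.+2)) => H; first exact: (conv Hs H).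
  have [v Hv1 Hv2] := removed_ex H.
  exfalso.
  case HvW: (v \in V1).
    by have := (@key2 T e thr Hs V1 k1 k2 M v (fun x => erefl) Hb HvW Hv1 Hv2 erefl).
  refine (@key2 T e thr Hs (~: V1) k2 k1 M v _ _ _ Hv1 Hv2 _).
  + by move=> x; rewrite /thr inE; case: (x \in V1).
  + move=> x y /Hb; rewrite !inE; by case: (x \in V1); case: (y \in V1).
  + by rewrite inE HvW.
  + by rewrite setCK addnC.
- move=> T e p part k [Hs Hi] Hp Hk.
  have Hsum : \sum_(i < p) #|[set v | part v == i]| = #|T|.
    rewrite -sum1_card (partition_big part xpredT) //=.
    by apply: eq_bigr => i _; rewrite -sum1_card; apply: eq_bigl => v; rewrite inE.
  rewrite Hsum.
  set N := #|T| - minval k.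
  case: (eqVneq (Bs e (fun v => k (part v)) N.+2) (Bs e (fun v => k (part v)) N.+1)) => H.
    exact: (conv Hs H).
  have [v Hv] := key1 Hi H.
  have Hm : minval k <= k (part v) by apply: big_minn_le.
  rewrite /N in Hv; lia.
Qed.
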